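(* Let $S$ be a semigroup. Every strongly irreducible semiprime interior ideal of $S$ is a strongly prime interior ideal of $S$.
   Context: A subsemigroup $I$ of $S$ (non-empty with $II\subseteq I$) is an interior ideal if $SIS\subseteq I$. For subsets $A,B$, $AB=\{ab:a\in A,b\in B\}$ and $A^2=AA$. An interior ideal $I$ is semiprime if for every interior ideal $A$ of $S$, $A^{2}\subseteq I$ implies $A\subseteq I$. It is strongly irreducible if for all interior ideals $I_1,I_2$ of $S$, $I_1\cap I_2\subseteq I$ implies $I_1\subseteq I$ or $I_2\subseteq I$. It is strongly prime if for all interior ideals $I_1,I_2$ of $S$, $I_1I_2\cap I_2I_1\subseteq I$ implies $I_1\subseteq I$ or $I_2\subseteq I$. *)

(* Defs.v *)
Record semigroup := Semigroup {
  carrier :> Type;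
  op : carrier -> carrier -> carrier;
  op_assoc : forall x y z, op x (op y z) = op (op x y) z
}.

Section Defs.
Variable S : semigroup.

Definition subset (A B : S -> Prop) : Prop := forall x, A x -> B x.

Definition setmul (A B : S -> Prop) : S -> Prop :=
  fun z => exists a b, A a /\ B b /\ z = op S a b.

Definition setI (A B : S -> Prop) : S -> Prop := fun x => A x /\ B x.

Definition setT : S -> Prop := fun _ => True.

Definition interior_ideal (I : S -> Prop) : Prop :=
  (exists x, I x) /\
  subset (setmul I I) I /\
  subset (setmul (setmul setT I) setT) I.

Definition semiprime (I : S -> Prop) : Prop :=
  interior_ideal I /\
  forall A, interior_ideal A -> subset (setmul A A) I -> subset A I.

Definition strongly_irreducible (I : S -> Prop) : Prop :=
  interior_ideal I /\
  forall I1 I2, interior_ideal I1 -> interior_ideal I2 ->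
    subset (setI I1 I2) I -> subset I1 I \/ subset I2 I.

Definition strongly_prime (I : S -> Prop) : Prop :=
  interior_ideal I /\
  forall I1 I2, interior_ideal I1 -> interior_ideal I2 ->
    subset (setI (setmul I1 I2) (setmul I2 I1)) I -> subset I1 I \/ subset I2 I.

End Defs.

(* Main.v *)
Require Import Defs.

Lemma inter_ii (S : semigroup) (I1 I2 : S -> Prop) :
  interior_ideal S I1 -> interior_ideal S I2 -> interior_ideal S (setI S I1 I2).
Proof.
  intros [[a Ha] [M1 N1]] [[b Hb] [M2 N2]].
  split; [|split].
  - exists (op S b (op S a (op S b (op S a b)))). split.
    + apply N1. exists (op S b a), (op S b (op S a b)). split; [|split; [exact I|]].
      * exists b, a. split; [exact I|split; [exact Ha|reflexivity]].
      * rewrite !op_assoc. reflexivity.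
    + apply N2. exists (op S (op S b a) b), (op S a b). split; [|split; [exact I|]].
      * exists (op S b a), b. split; [exact I|split; [exact Hb|reflexivity]].
      * rewrite !op_assoc. reflexivity.
  - intros z (x & y & [Hx1 Hx2] & [Hy1 Hy2] & ->). split.
    + apply M1. exists x, y. auto.
    + apply M2. exists x, y. auto.
  - intros z (u & t & (s & x & _ & [Hx1 Hx2] & ->) & _ & ->). split.
    + apply N1. exists (op S s x), t. split; [|split; [exact I|reflexivity]].
      exists s, x. split; [exact I|split; auto].
    + apply N2. exists (op S s x), t. split; [|split; [exact I|reflexivity]].
      exists s, x. split; [exact I|split; auto].
Qed.

Theorem mainTheorem10 (S : semigroup) (I : S -> Prop) :
  interior_ideal S I -> strongly_irreducible S I -> semiprime S I ->
  strongly_prime S I.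
Proof.
  intros HI [_ Hirr] [_ Hsp]. split; [exact HI|].
  intros I1 I2 H1 H2 Hsub. apply Hirr; auto.
  apply Hsp. apply inter_ii; auto.
  intros z (x & y & [Hx1 Hx2] & [Hy1 Hy2] & ->). apply Hsub. split.
  - exists x, y. auto.
  - exists x, y. auto.
Qed.
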